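(* Let $m\geq 1$, $n\geq 3$, let $k\in\{1,\ldots,m\}$ and let $i,j\in V^k$. A walk of length $n-1$ from $i$ to $j$ exists in $D^m_n$ if and only if one of the following holds: $i=1$ and $j=(k-1)(n-1)+n$; or $i=(k-1)(n-1)+2$ and $j=1$; or $i=(k-1)(n-1)+\ell$ and $j=i-1$ for some $\ell\in\{3,\ldots,n\}$. Moreover, in each of these cases there is exactly one walk of length $n-1$ from $i$ to $j$ in $D^m_n$.
   Context: For integers $m\geq 1$, $n\geq 3$, the oriented Dutch windmill graph $D^m_n$ is the directed graph with vertex set $V=\{1,2,\ldots,m(n-1)+1\}$ whose directed edges $(a,b)$ are exactly: $(1,(k-1)(n-1)+2)$ for $k\in\{1,\ldots,m\}$; $((k-1)(n-1)+i,(k-1)(n-1)+i+1)$ for $k\in\{1,\ldots,m\}$ and $i\in\{2,\ldots,n-1\}$; and $((k-1)(n-1)+n,1)$ for $k\in\{1,\ldots,m\}$. For $k\in\{1,\ldots,m\}$, $V^k=\{1\}\cup\{(k-1)(n-1)+\ell:\ \ell=2,\ldots,n\}$ is the vertex set of the $k$-th directed cycle $\langle 1,(k-1)(n-1)+2,\ldots,(k-1)(n-1)+n,1\rangle$. A walk is a sequence of vertices $\langle v_1,\ldots,v_r\rangle$ in which each $(v_t,v_{t+1})$ is an edge; its length is $r-1$. *)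

(* Defs.v *)
From mathcomp Require Import all_boot.
Set Implicit Arguments. Unset Strict Implicit. Unset Printing Implicit Defensive.

(* Directed edge relation of the oriented Dutch windmill graph D^m_n on the
   vertex set {1, ..., m(n-1)+1}:
   (1, (k-1)(n-1)+2) for k in {1..m};
   ((k-1)(n-1)+i, (k-1)(n-1)+i+1) for k in {1..m}, i in {2..n-1};
   ((k-1)(n-1)+n, 1) for k in {1..m}. *)
Definition dw_edge (m n : nat) (a b : nat) : bool :=
  [|| has (fun k => (a == 1) && (b == (k - 1) * (n - 1) + 2)) (iota 1 m),
      has (fun k => has (fun i => (a == (k - 1) * (n - 1) + i)
                                  && (b == (k - 1) * (n - 1) + i + 1))
                        (iota 2 (n - 2))) (iota 1 m)
    | has (fun k => (a == (k - 1) * (n - 1) + n) && (b == 1)) (iota 1 m)].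

Definition in_Vk (n k v : nat) : bool :=
  (v == 1) || has (fun l => v == (k - 1) * (n - 1) + l) (iota 2 (n - 1)).

(* A walk <v_1, ..., v_r> of length r-1 from i to j is encoded by its head
   v_1 = i and the tail p = [v_2; ...; v_r]; its length is size p. *)
Definition is_walk (m n : nat) (L i j : nat) (p : seq nat) : Prop :=
  [/\ size p = L, path (dw_edge m n) i p & last i p = j].

(* Main.v *)
Require Import Defs.
From mathcomp Require Import all_boot zify.
Set Warnings "-notation-overridden".


Section W.
Variables m n : nat.
Hypothesis Hn : 3 <= n.
Local Notation e := (dw_edge m n).

Lemma disj q1 q2 l1 l2 : 2 <= l1 <= n -> 2 <= l2 <= n ->
  q1*(n-1)+l1 = q2*(n-1)+l2 -> q1 = q2 /\ l1 = l2.
Proof.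
move=> H1 H2 E; case: (ltngtP q1 q2) => Hq.
- have : q1.+1*(n-1) <= q2*(n-1) by rewrite leq_mul2r Hq orbT.
  rewrite mulSn; nia.
- have : q2.+1*(n-1) <= q1*(n-1) by rewrite leq_mul2r Hq orbT.
  rewrite mulSn; nia.
- subst; nia.
Qed.

Lemma edgeP a b : e a b ->
  (a = 1 /\ exists2 q, q < m & b = q*(n-1)+2)
  \/ (exists q l, [/\ q < m, 2 <= l < n, a = q*(n-1)+l & b = a+1])
  \/ (exists2 q, q < m & a = q*(n-1)+n /\ b = 1).
Proof.
rewrite /dw_edge => /or3P [/hasP [k Hk /andP[/eqP -> /eqP ->]]
  | /hasP [k Hk /hasP [i Hi /andP [/eqP Ha /eqP Hb]]]
  | /hasP [k Hk /andP[/eqP -> /eqP ->]]]; rewrite mem_iota in Hk.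
- left; split => //; exists (k-1) => //; nia.
- rewrite mem_iota in Hi; right; left; exists (k-1), i; split => //; nia.
- right; right; exists (k-1) => //; nia.
Qed.

Lemma edge_1 q : q < m -> e 1 (q*(n-1)+2).
Proof.
move=> Hq; apply/or3P; apply: Or31; apply/hasP; exists q.+1.
  rewrite mem_iota; nia.
by rewrite /= subSS subn0 !eqxx.
Qed.

Lemma edge_mid q l : q < m -> 2 <= l < n -> e (q*(n-1)+l) (q*(n-1)+l+1).
Proof.
move=> Hq Hl; apply/or3P; apply: Or32; apply/hasP; exists q.+1.
  rewrite mem_iota; nia.
apply/hasP; exists l; first by rewrite mem_iota; nia.
by rewrite /= subSS subn0 !eqxx ?andbT.
Qed.

Lemma edge_last q : q < m -> e (q*(n-1)+n) 1.
Proof.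
move=> Hq; apply/or3P; apply: Or33; apply/hasP; exists q.+1.
  rewrite mem_iota; nia.
by rewrite /= subSS subn0 !eqxx ?andbT.
Qed.

Lemma edge_1_inv b : e 1 b -> exists2 q, q < m & b = q*(n-1)+2.
Proof.
move/edgeP => [[_ H]|[[q [l [_ Hl Ha _]]]|[q _ [Ha _]]]]. all: try exact H. all: exfalso; nia.
Qed.

Lemma edge_mid_inv q l b : q < m -> 2 <= l < n -> e (q*(n-1)+l) b ->
  b = q*(n-1)+l+1.
Proof.
move=> Hq Hl /edgeP [[Ha _]|[[q' [l' [_ Hl' Ha Hb]]]|[q' _ [Ha _]]]].
- nia.
- by rewrite Hb Ha.
- have [] := disj q q' l n ltac:(nia) ltac:(nia) Ha; nia.
Qed.

Lemma edge_last_inv q b : q < m -> e (q*(n-1)+n) b -> b = 1.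
Proof.
move=> Hq /edgeP [[Ha _]|[[q' [l' [_ Hl' Ha Hb]]]|[q' _ [Ha Hb]]]] //.
- nia.
- have [] := disj q q' n l' ltac:(nia) ltac:(nia) Ha; nia.
Qed.

Lemma last_iota x t : last x (iota x.+1 t) = x + t.
Proof. elim: t x => [|t IH] x /=; first by rewrite addn0. by rewrite IH addSnnS. Qed.

Lemma walk_fwd q l t p : q < m -> 2 <= l -> l + t <= n -> size p = t ->
  path e (q*(n-1)+l) p -> p = iota (q*(n-1)+l+1) t.
Proof.
elim: t l p => [|t IH] l [|b p] //= Hq Hl Hlt [Hs] /andP[He Hp].
have Eb := edge_mid_inv q l b Hq ltac:(nia) He.
subst b; congr (_ :: _).
have Hp' : path e (q * (n - 1) + l.+1) p by rewrite addnS -addn1.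
rewrite (IH l.+1 p Hq _ _ Hs Hp'); try nia.
by congr iota; nia.
Qed.

Lemma path_fwd q l t : q < m -> 2 <= l -> l + t <= n ->
  path e (q*(n-1)+l) (iota (q*(n-1)+l+1) t).
Proof.
elim: t l => [|t IH] l //= Hq Hl Hlt.
rewrite edge_mid //=; last nia.
have := IH l.+1 Hq ltac:(nia) ltac:(nia).
have -> : q * (n - 1) + l.+1 = q * (n - 1) + l + 1 by nia.
by have -> : q * (n - 1) + l + 1 + 1 = (q * (n - 1) + l + 1).+1 by nia.
Qed.

Lemma walk1 t p : 0 < m -> t <= n - 1 -> size p = t -> path e 1 p ->
  exists2 q, q < m & p = iota (q*(n-1)+2) t.
Proof.
case: t p => [|t] [|b p] //= Hm Ht.
- by move=> _ _; exists 0.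
- move=> [Hs] /andP [/edge_1_inv [q Hq ->] Hp]; exists q => //.
  rewrite (walk_fwd q 2 t p Hq) //; try nia; by rewrite addn1.
Qed.

Lemma path1 q t : q < m -> t <= n - 1 -> path e 1 (iota (q*(n-1)+2) t).
Proof.
case: t => [|t] //= Hq Ht; rewrite edge_1 //=.
have := path_fwd q 2 t Hq isT ltac:(nia); by rewrite addn1.
Qed.

Lemma last_iota1 x a t : last x (iota a t.+1) = a + t.
Proof. by rewrite /= last_iota. Qed.

Lemma last_iota2 x t : last x (iota (x + 1) t) = x + t.
Proof. by rewrite addn1 last_iota. Qed.

Lemma walk_l q l p : q < m -> 2 <= l <= n -> size p = n - 1 ->
  path e (q*(n-1)+l) p ->
  exists r, [/\ path e 1 r, p = iota (q*(n-1)+l+1) (n-l) ++ 1 :: r & size r = l - 2].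
Proof.
move=> Hq Hl Hs Hp.
have E := cat_take_drop (n-l) p.
set p1 := take (n-l) p in E; set p2 := drop (n-l) p in E.
have Hs1 : size p1 = n - l by rewrite size_takel; nia.
have Hs2 : size p2 = l - 1 by rewrite size_drop; nia.
move: Hp; rewrite -E cat_path => /andP[H1 H2].
have Ep1 := walk_fwd q l (n-l) p1 Hq ltac:(nia) ltac:(nia) Hs1 H1.
rewrite Ep1 last_iota2 in H2; rewrite Ep1 in E.
move: E H2 Hs2; case: p2 => [|b r] E H2 Hs2; first by simpl in Hs2; nia.
move: H2; rewrite /= => /andP[Hb Hr].
have Eb : b = 1.
  apply: (edge_last_inv q) => //.
  by have <- : q * (n - 1) + l + (n - l) = q * (n - 1) + n by nia.
subst b; exists r; split => //; simpl in Hs2; [by rewrite Ep1 | nia].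
Qed.

Lemma inVkP k v : in_Vk n k v -> v = 1 \/ exists2 l, 2 <= l <= n & v = (k-1)*(n-1)+l.
Proof.
rewrite /in_Vk => /orP [/eqP ->|/hasP [l Hl /eqP ->]]; first by left.
rewrite mem_iota in Hl; right; exists l => //; nia.
Qed.

End W.

Lemma conclude (P : seq nat -> Prop) (C : Prop) w :
  (forall p, P p -> C /\ p = w) -> (C -> P w) ->
  ((exists p, P p) <-> C) /\ (C -> exists! p, P p).
Proof.
move=> H1 H2; split; first split.
- by move=> [p /H1 []].
- by move=> /H2 Hw; exists w.
- move=> /H2 Hw; exists w; split => // p /H1 [].
  by move=> _ ->.
Qed.

Theorem lemma2p1 (m n k i j : nat) :
  1 <= m -> 3 <= n -> 1 <= k <= m ->
  in_Vk n k i -> in_Vk n k j ->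
  let cases :=
    (i = 1 /\ j = (k - 1) * (n - 1) + n)
    \/ (i = (k - 1) * (n - 1) + 2 /\ j = 1)
    \/ (exists l, 3 <= l <= n /\ i = (k - 1) * (n - 1) + l /\ j = i - 1) in
  ((exists p, is_walk m n (n - 1) i j p) <-> cases)
  /\ (cases -> exists! p, is_walk m n (n - 1) i j p).
Proof.
move=> Hm Hn Hk Hi Hj cases; rewrite /cases; clear cases.
have Hq : k - 1 < m by nia.
move: Hq; set q := k - 1 => Hq.
have Hj' : j = 1 \/ exists2 l, 2 <= l <= n & j = q*(n-1)+l by apply: inVkP.
case: (@inVkP n Hn k i Hi) => [Ei|[l Hl Ei]].
- subst i; apply: (conclude _ _ (iota (q*(n-1)+2) (n-1))).
  + move=> p [Hs Hp Hl].
    have [q' Hq' Ep] := walk1 _ _ Hn _ _ Hm (leqnn _) Hs Hp.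
    have El : last 1 p = q'*(n-1)+n.
      rewrite Ep (_ : n - 1 = (n-2).+1); last nia.
      rewrite last_iota1; nia.
    rewrite El in Hl; subst j.
    case: Hj' => [|[l'' Hl'' Ej]]; first nia.
    have [Eq _] := disj _ Hn q' q n l'' ltac:(nia) Hl'' Ej.
    subst q'; split => //; left; split => //.
  + move=> [[_ ->]|[[E _]|[l [Hl [E _]]]]]; try (exfalso; nia).
    split; first by rewrite size_iota.
      exact: path1.
    rewrite (_ : n - 1 = (n-2).+1); last nia.
    rewrite last_iota1; nia.
- subst i; apply: (conclude _ _ (iota (q*(n-1)+l+1) (n-l) ++ 1 :: iota (q*(n-1)+2) (l-2))).
  + move=> p [Hs Hp Hl'].
    have [r [Hr Ep Hsr]] := walk_l _ _ Hn _ _ _ Hq Hl Hs Hp.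
    have [q' Hq' Er] := walk1 _ _ Hn (l-2) r Hm ltac:(nia) Hsr Hr.
    rewrite Ep last_cat /= Er in Hl'.
    have [El2|El3] : l = 2 \/ 3 <= l by nia.
    * subst l; rewrite /= in Hl'; subst j; split.
        by right; left.
      by rewrite Ep Er.
    * move: Hl'; rewrite (_ : l - 2 = (l-3).+1); last nia.
      rewrite last_iota1 => Hl'; subst j.
      case: Hj' => [|[l'' Hl'' Ej]]; first nia.
      have [Eq _] := disj _ Hn q' q (l-1) l'' ltac:(nia) Hl'' ltac:(nia).
      subst q'; split; last by rewrite Ep Er (_ : l - 2 = (l-3).+1) //; nia.
      right; right; exists l; split; [nia|split; nia].
  + move=> HC.
    have HC' : (l = 2 /\ j = 1) \/ (3 <= l /\ j = q*(n-1)+l-1).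
      case: HC => [[E _]|[[E Ej]|[l' [Hl' [E Ej]]]]]; first (exfalso; nia);
      [ have [_ ->] := disj _ Hn q q l 2 Hl ltac:(nia) E; by left
      | have [_ El] := disj _ Hn q q l l' Hl ltac:(nia) E; subst l'; right; split; nia].
    case: HC' => [[El2 Ej]|[El3 Ej]].
    * subst l j; split.
      -- rewrite size_cat /= !size_iota; nia.
      -- rewrite cat_path last_iota2 path_fwd //= ?andbT; try nia.
         rewrite (_ : q * (n - 1) + 2 + (n - 2) = q * (n - 1) + n); last nia.
         by rewrite edge_last.
      -- by rewrite last_cat.
    * subst j; split.
      -- rewrite size_cat /= !size_iota; nia.
      -- rewrite cat_path last_iota2 path_fwd //=; try nia.
         rewrite (_ : q * (n - 1) + l + (n - l) = q * (n - 1) + n); last nia.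
         rewrite edge_last //=; apply: path1 => //; nia.
      -- rewrite last_cat /= (_ : l - 2 = (l-3).+1); last nia.
         rewrite last_iota1; nia.
Qed.
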